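(* Assume $\mathfrak g$ is semisimple. Let $w\in W$ and let $\Omega$ be a prime ideal of $\mathcal S$ such that $w.\Omega$ is prime and both $P^+\cap\mathcal V(\Omega)$ and $P^+\cap\mathcal V(w.\Omega)$ are nonempty. Then $w\in W^\lambda$, where $\lambda=\lambda_\Omega$.
   Context: $F$ is an algebraically closed field of characteristic zero; $\mathfrak g$ is a semisimple Lie algebra over $F$ with Cartan subalgebra $\mathfrak h$, root system $R$, positive system $R^+$, Weyl group $W$, $\rho=\frac12\sum_{\alpha\in R^+}\alpha$, dot action $w.\xi=w(\xi+\rho)-\rho$; $H_\alpha\in\mathfrak h$ is the coroot of $\alpha$. $\mathcal S=S(\mathfrak h)$ is identified with polynomial functions on $\mathfrak h^*$, with $(w.f)(\xi)=f(w^{-1}.\xi)$ and $w.\Omega=\{w.f:f\in\Omega\}$; $\mathcal V(\Omega)$ is the zero set. For a prime $\Omega$, $\mathbb F$ is the fraction field of $\mathcal S/\Omega$ and $\lambda_\Omega$ the $\mathbb F$-linear extension of $\mathfrak h\hookrightarrow\mathcal S\to\mathcal S/\Omega\hookrightarrow\mathbb F$. $P^+$ is the set of dominant integral weights (those $\mu$ with $\dim L(\mu)<\infty$). For $\lambda=\lambda_\Omega$: $R_\lambda=\{\alpha\in R: H_\alpha-n\in\Omega\text{ for some }n\in\mathbb Z\}$, $R^+_\lambda=R^+\cap R_\lambda$, $B_\lambda$ the simple roots of $R_\lambda$ in $R^+_\lambda$, $W^\lambda=\{w\in W:w(B_\lambda)\subseteq R^+\}$. *)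

(* Defs.v *)
From HB Require Import structures.
From mathcomp Require Import all_boot all_order all_algebra.
From mathcomp Require Import mpoly.
From Stdlib Require Import ClassicalDescription.
Set Implicit Arguments. Unset Strict Implicit. Unset Printing Implicit Defensive.
Import Order.TTheory GRing.Theory Num.Theory.
Local Open Scope ring_scope.

(* Conventions: h^* is identified with F^n = 'rV[F]_n via a basis, h with
   its dual F^n, the pairing <xi, H> being sum_i xi_i H_i.  Roots live in
   h^*, coroots H_alpha = cor alpha in h.  W acts on h^* on the right:
   w(xi) = xi *m w.  S = S(h) = polynomial functions on h^* = {mpoly F[n]}. *)

Section RootData.
Variables (F : fieldType) (n : nat).
Implicit Types (xi mu H a b : 'rV[F]_n).

Definition pairing xi H : F := \sum_(i < n) xi 0 i * H 0 i.

Variables (R : seq 'rV[F]_n) (cor : 'rV[F]_n -> 'rV[F]_n).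

Definition refl a xi : 'rV[F]_n := xi - pairing xi (cor a) *: a.

(* Axioms of a reduced (crystallographic) root system spanning h^*,
   i.e. the root system of a semisimple Lie algebra w.r.t. a Cartan
   subalgebra, with its coroots. *)
Definition root_system : Prop :=
  [/\ uniq R, (0 : 'rV[F]_n) \notin R &
      (forall xi, exists c : 'I_(size R) -> F, xi = \sum_(i < size R) c i *: R`_i)] /\
  [/\ (forall a, a \in R -> pairing a (cor a) = 2),
      (forall a b, a \in R -> b \in R -> refl a b \in R),
      (forall a b, a \in R -> b \in R -> exists z : int, pairing b (cor a) = z%:~R)
    & (forall a (c : F), a \in R -> c *: a \in R -> c = 1 \/ c = -1)].

Variable D : seq 'rV[F]_n.

Definition nonneg_comb a : Prop :=
  exists c : 'I_(size D) -> nat, a = \sum_(i < size D) (c i)%:R *: D`_i.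

Definition is_base : Prop :=
  [/\ {subset D <= R},
      (forall c : 'I_(size D) -> F,
          \sum_(i < size D) c i *: D`_i = 0 -> forall i, c i = 0)
    & (forall a, a \in R -> nonneg_comb a \/ nonneg_comb (- a))].

Definition pos_root a : Prop := a \in R /\ nonneg_comb a.

Definition pos_rootb a : bool :=
  if excluded_middle_informative (pos_root a) then true else false.

Definition rho : 'rV[F]_n := 2^-1 *: \sum_(a <- R | pos_rootb a) a.

Definition dot_wt (w : 'M[F]_n) xi : 'rV[F]_n := (xi + rho) *m w - rho.

Definition refl_mx a : 'M[F]_n := 1%:M - (cor a)^T *m a.

Definition in_weyl (w : 'M[F]_n) : Prop :=
  exists s : seq 'rV[F]_n, all (mem R) s /\
    w = foldr (fun a m => refl_mx a *m m) 1%:M s.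

Definition dominant_integral mu : Prop :=
  forall d, d \in D -> exists k : nat, pairing mu (cor d) = k%:R.

Definition ev (f : {mpoly F[n]}) xi : F := f.@[fun i => xi 0 i].

Definition zero_set (Om : {mpoly F[n]} -> Prop) xi : Prop :=
  forall f, Om f -> ev f xi = 0.

Definition prime_ideal (Om : {mpoly F[n]} -> Prop) : Prop :=
  [/\ Om 0,
      (forall f g, Om f -> Om g -> Om (f + g)),
      (forall f g, Om g -> Om (f * g)),
      ~ Om 1
    & (forall f g, Om (f * g) -> Om f \/ Om g)].

(* The element of S = S(h) corresponding to H in h (a linear form on h^* ). *)
Definition hpoly H : {mpoly F[n]} := \sum_(i < n) H 0 i *: 'X_ i.

(* w.f, with (w.f)(xi) = f(w^{-1}.xi), w^{-1}.xi = (xi + rho) w^{-1} - rho. *)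
Definition dot_coord (w : 'M[F]_n) (j : 'I_n) : {mpoly F[n]} :=
  \sum_(i < n) (('X_ i + (rho 0 i)%:MP) * ((invmx w) i j)%:MP) - (rho 0 j)%:MP.

Definition dot_poly (w : 'M[F]_n) (f : {mpoly F[n]}) : {mpoly F[n]} :=
  f \mPo [tuple dot_coord w j | j < n].

Definition dot_ideal (w : 'M[F]_n) (Om : {mpoly F[n]} -> Prop)
  : {mpoly F[n]} -> Prop :=
  fun g => exists2 f, Om f & g = dot_poly w f.

(* R_lambda, R^+_lambda, B_lambda for lambda = lambda_Omega. *)
Definition int_root (Om : {mpoly F[n]} -> Prop) a : Prop :=
  a \in R /\ exists z : int, Om (hpoly (cor a) - z%:~R).

Definition pos_int_root Om a : Prop := int_root Om a /\ pos_root a.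

(* simple roots of R_lambda in R^+_lambda: indecomposable elements. *)
Definition simple_int_root Om a : Prop :=
  pos_int_root Om a /\
  ~ (exists b c, [/\ pos_int_root Om b, pos_int_root Om c & a = b + c]).

Definition in_Wlambda Om (w : 'M[F]_n) : Prop :=
  forall a, simple_int_root Om a -> pos_root (a *m w).

End RootData.

(* Main.v *)
Require Import Defs.
From HB Require Import structures.
From mathcomp Require Import all_boot all_order all_algebra.
From mathcomp Require Import mpoly.
From mathcomp Require Import ring.
From Stdlib Require ClassicalDescription.
Import GRing.Theory.
Local Open Scope ring_scope.
Set Implicit Arguments. Unset Strict Implicit.


Lemma pairingDl (F : fieldType) n (x y h : 'rV[F]_n) :
  pairing (x + y) h = pairing x h + pairing y h.
Proof. by rewrite /pairing -big_split; apply: eq_bigr => i _; rewrite mxE mulrDl. Qed.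
Lemma pairingZl (F : fieldType) n c (x h : 'rV[F]_n) :
  pairing (c *: x) h = c * pairing x h.
Proof. by rewrite /pairing mulr_sumr; apply: eq_bigr => i _; rewrite mxE mulrA. Qed.
Lemma pairingNl (F : fieldType) n (x h : 'rV[F]_n) :
  pairing (- x) h = - pairing x h.
Proof. by rewrite -scaleN1r pairingZl mulN1r. Qed.
Lemma pairingBl (F : fieldType) n (x y h : 'rV[F]_n) :
  pairing (x - y) h = pairing x h - pairing y h.
Proof. by rewrite pairingDl pairingNl. Qed.
Lemma pairingDr (F : fieldType) n (x y h : 'rV[F]_n) :
  pairing h (x + y) = pairing h x + pairing h y.
Proof. by rewrite /pairing -big_split; apply: eq_bigr => i _; rewrite mxE mulrDr. Qed.
Lemma pairingZr (F : fieldType) n c (x h : 'rV[F]_n) :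
  pairing h (c *: x) = c * pairing h x.
Proof. by rewrite /pairing mulr_sumr; apply: eq_bigr => i _; rewrite mxE mulrCA. Qed.
Lemma pairingNr (F : fieldType) n (x h : 'rV[F]_n) :
  pairing h (- x) = - pairing h x.
Proof. by rewrite -scaleN1r pairingZr mulN1r. Qed.
Lemma pairingBr (F : fieldType) n (x y h : 'rV[F]_n) :
  pairing h (x - y) = pairing h x - pairing h y.
Proof. by rewrite pairingDr pairingNr. Qed.
Lemma pairing_suml (F : fieldType) n (I : Type) (r : seq I) (P : pred I) (f : I -> 'rV[F]_n) h :
  pairing (\sum_(i <- r | P i) f i) h = \sum_(i <- r | P i) pairing (f i) h.
Proof.
elim/big_rec2: _ => [|i y1 y2 _ <-]; last by rewrite pairingDl.
by rewrite /pairing big1 // => i _; rewrite mxE mul0r.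
Qed.
Lemma pairing0l (F : fieldType) n (h : 'rV[F]_n) : pairing 0 h = 0.
Proof. by rewrite /pairing big1 // => i _; rewrite mxE mul0r. Qed.

Lemma refl_mxE (F : fieldType) n (a x : 'rV[F]_n) h :
  x *m (1%:M - h^T *m a) = x - pairing x h *: a.
Proof.
apply/rowP => j; rewrite mulmxBr mulmx1 mulmxA !mxE; congr (_ - _).
rewrite big_ord1 !mxE; congr (_ * _); apply: eq_bigr => i _; rewrite mxE //.
Qed.

Lemma reflD (F : fieldType) n (cor : 'rV[F]_n -> 'rV[F]_n) a x y :
  refl cor a (x + y) = refl cor a x + refl cor a y.
Proof. by rewrite /refl pairingDl scalerDl opprD addrACA. Qed.
Lemma reflZ (F : fieldType) n (cor : 'rV[F]_n -> 'rV[F]_n) a c x :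
  refl cor a (c *: x) = c *: refl cor a x.
Proof. by rewrite /refl pairingZl scalerBr scalerA. Qed.
Lemma reflN (F : fieldType) n (cor : 'rV[F]_n -> 'rV[F]_n) a x :
  refl cor a (- x) = - refl cor a x.
Proof. by rewrite -scaleN1r reflZ scaleN1r. Qed.
Lemma reflB (F : fieldType) n (cor : 'rV[F]_n -> 'rV[F]_n) a x y :
  refl cor a (x - y) = refl cor a x - refl cor a y.
Proof. by rewrite reflD reflN. Qed.
Lemma refl_sum (F : fieldType) n (cor : 'rV[F]_n -> 'rV[F]_n) a (I : Type) (r : seq I) (P : pred I) (f : I -> 'rV[F]_n) :
  refl cor a (\sum_(i <- r | P i) f i) = \sum_(i <- r | P i) refl cor a (f i).
Proof.
elim/big_rec2: _ => [|i y1 y2 _ <-]; last by rewrite reflD.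
by rewrite /refl pairing0l scale0r subr0.
Qed.
Lemma refl_self (F : fieldType) n (cor : 'rV[F]_n -> 'rV[F]_n) a :
  pairing a (cor a) = 2 -> refl cor a a = - a.
Proof.
move=> h; rewrite /refl h -{1}(scale1r a) -scalerBl -scaleN1r; congr (_ *: _); ring.
Qed.
Lemma reflK (F : fieldType) n (cor : 'rV[F]_n -> 'rV[F]_n) a x :
  pairing a (cor a) = 2 -> refl cor a (refl cor a x) = x.
Proof.
move=> h; rewrite /refl pairingBl pairingZl h -!scaleNr -addrA -scalerDl.
by rewrite [X in X *: a](_ : _ = 0) ?scale0r ?addr0 //; ring.
Qed.
Lemma natr_injF (F : fieldType) (ch : [pchar F] =i pred0) (m k : nat) :
  (m%:R : F) = k%:R -> m = k.
Proof.
move=> e; have P := (pcharf0P F).1 ch.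
wlog le: m k e / (m <= k)%N.
  by move=> W; case/orP: (leq_total m k) => H; [|symmetry]; apply: W.
move/eqP: e; rewrite eq_sym -subr_eq0 -natrB // P subn_eq0 => le2.
by apply/eqP; rewrite eqn_leq le le2.
Qed.

Lemma refl_unique (F : fieldType) n (R : seq 'rV[F]_n) (ch : [pchar F] =i pred0)
  (a h h' : 'rV[F]_n) :
  (forall xi, exists c : 'I_(size R) -> F, xi = \sum_(i < size R) c i *: R`_i) ->
  a != 0 -> pairing a h = 2 -> pairing a h' = 2 ->
  (forall g, g \in R -> g - pairing g h *: a \in R) ->
  (forall g, g \in R -> g - pairing g h' *: a \in R) ->
  forall y, pairing y h = pairing y h'.
Proof.
move=> span a0 ha ha' Rh Rh'.
have onR : forall g, g \in R -> pairing g h = pairing g h'.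
  move=> g gR; apply/eqP; rewrite eq_sym -subr_eq0; apply/negPn/negP => c0.
  set c := pairing g h' - pairing g h in c0.
  have iter : forall m : nat, g + (m%:R * c) *: a \in R.
    elim=> [|m IH]; first by rewrite mul0r scale0r addr0.
    have := Rh _ (Rh' _ IH).
    set v := g + _.
    suff -> : v - pairing v h' *: a - pairing (v - pairing v h' *: a) h *: a
              = g + (m.+1%:R * c) *: a by [].
    rewrite /v !pairingBl !pairingDl !pairingZl ha ha'.
    rewrite -!addrA; congr (_ + _); rewrite -!scaleNr -!scalerDl; congr (_ *: _).
    by rewrite /c -addn1 natrD; ring.
  pose f := fun m : nat => g + (m%:R * c) *: a.
  have fi : injective f.
    move=> m1 m2 /addrI /eqP; rewrite -subr_eq0 -scalerBl scaler_eq0 (negPf a0) orbF.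
    rewrite -mulrBl mulf_eq0 (negPf c0) orbF subr_eq0 => /eqP.
    exact: natr_injF.
  have := uniq_leq_size (s1 := map f (iota 0 (size R).+1)) (s2 := R).
  rewrite map_inj_uniq // iota_uniq size_map size_iota ltnn => H.
  suff : false by [].
  by apply: H => // x /mapP [m _ ->]; exact: iter.
move=> y; have [c ->] := span y; rewrite !pairing_suml; apply: eq_bigr => i _.
by rewrite !pairingZl onR // mem_nth.
Qed.

Lemma transport (F : fieldType) n (R : seq 'rV[F]_n) cor (ch : [pchar F] =i pred0) :
  root_system R cor -> forall a b, a \in R -> b \in R ->
  forall x, pairing (refl cor b x) (cor (refl cor b a)) = pairing x (cor a).
Proof.
move=> [[uR n0R span] [h2 hrefl hint hred]] a b aR bR x.
set a' := refl cor b a.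
have a'R : a' \in R by exact: hrefl.
set h' := cor a - pairing b (cor a) *: cor b.
have key : forall y, pairing y h' = pairing (refl cor b y) (cor a).
  move=> y; rewrite /h' /refl pairingBr pairingZr pairingBl pairingZl; ring.
have e := @refl_unique F n R ch a' (cor a') h' span.
rewrite e.
- by rewrite key reflK ?h2.
- by apply/negP => /eqP e0; move: n0R; rewrite -e0 a'R.
- exact: h2.
- by rewrite key /a' reflK ?h2.
- by move=> g gR; exact: hrefl.
move=> g gR; rewrite key.
have -> : g - pairing (refl cor b g) (cor a) *: a' = refl cor b (refl cor a (refl cor b g)).
  have E : refl cor a (refl cor b g) = refl cor b g - pairing (refl cor b g) (cor a) *: a by [].
  by rewrite E reflB reflZ reflK ?h2.
by apply: (hrefl) => //; apply: (hrefl) => //; apply: (hrefl).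
Qed.

Lemma refl_perm (F : fieldType) n (R : seq 'rV[F]_n) cor :
  root_system R cor -> forall a, a \in R -> perm_eq (map (refl cor a) R) R.
Proof.
move=> [[uR n0R span] [h2 hrefl hint hred]] a aR.
have inj : injective (refl cor a) by apply: (can_inj (g := refl cor a)) => x; rewrite reflK ?h2.
have um : uniq (map (refl cor a) R) by rewrite map_inj_uniq.
have sub : {subset map (refl cor a) R <= R} by move=> x /mapP [g gR ->]; apply: hrefl.
have [_ eqi] := uniq_min_size um sub (eq_leq (esym (size_map _ _))).
exact: uniq_perm.
Qed.

Definition Bf (F : fieldType) n (R : seq 'rV[F]_n) cor (x y : 'rV[F]_n) : F :=
  \sum_(g <- R) pairing x (cor g) * pairing y (cor g).

Lemma Bf_refl (F : fieldType) n (R : seq 'rV[F]_n) cor (ch : [pchar F] =i pred0) :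
  root_system R cor -> forall a, a \in R -> forall x y,
  Bf R cor (refl cor a x) (refl cor a y) = Bf R cor x y.
Proof.
move=> RS a aR x y; have RS' := RS.
move: RS' => [[uR n0R span] [h2 hrefl hint hred]].
rewrite /Bf -[in RHS](perm_big _ (refl_perm RS aR)) big_map.
apply: eq_big_seq => g gR.
have gR' : refl cor a g \in R by apply: hrefl.
by rewrite -!(transport ch RS gR' aR) reflK ?h2.
Qed.

Lemma Bf_Bl (F : fieldType) n (R : seq 'rV[F]_n) cor x u c y :
  Bf R cor (x - c *: u) y = Bf R cor x y - c * Bf R cor u y.
Proof.
rewrite /Bf mulr_sumr -sumrB; apply: eq_bigr => g _.
by rewrite pairingBl pairingZl; ring.
Qed.

Lemma Bf_Nr (F : fieldType) n (R : seq 'rV[F]_n) cor x y :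
  Bf R cor x (- y) = - Bf R cor x y.
Proof.
rewrite /Bf -sumrN; apply: eq_bigr => g _.
by rewrite pairingNl; ring.
Qed.

Lemma Bf_sumr (F : fieldType) n (R : seq 'rV[F]_n) cor x m (c : 'I_m -> F) (v : 'I_m -> 'rV[F]_n) :
  Bf R cor x (\sum_(i < m) c i *: v i) = \sum_(i < m) c i * Bf R cor x (v i).
Proof.
rewrite /Bf.
under eq_bigr => g _ do rewrite pairing_suml big_distrr.
rewrite exchange_big; apply: eq_bigr => i _; rewrite mulr_sumr; apply: eq_bigr => g _.
by rewrite pairingZl mulrCA.
Qed.

Lemma Bf_key (F : fieldType) n (R : seq 'rV[F]_n) cor (ch : [pchar F] =i pred0) :
  root_system R cor -> forall a, a \in R -> forall x,
  2 * Bf R cor x a = pairing x (cor a) * Bf R cor a a.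
Proof.
move=> RS a aR x; have RS' := RS.
move: RS' => [[uR n0R span] [h2 hrefl hint hred]].
have := Bf_refl ch RS aR x a.
rewrite refl_self ?h2 // Bf_Nr /refl Bf_Bl => e.
set B := Bf R cor x a in e *; set P := _ * Bf R cor a a in e *.
have : B + (B - P) = 0 by rewrite -{1}e addNr.
by rewrite addrA => /eqP; rewrite subr_eq0 => /eqP <-; ring.
Qed.

Lemma coroot_formula (F : fieldType) n (R : seq 'rV[F]_n) cor (ch : [pchar F] =i pred0)
  (D : seq 'rV[F]_n) :
  root_system R cor -> {subset D <= R} -> forall a, a \in R ->
  forall c : 'I_(size D) -> F, a = \sum_(i < size D) c i *: D`_i ->
  forall x, pairing x (cor a) * Bf R cor a a =
    \sum_(i < size D) c i * (pairing x (cor D`_i) * Bf R cor D`_i D`_i).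
Proof.
move=> RS DR a aR c ea x.
rewrite -(Bf_key ch RS aR).
have -> : \sum_(i < size D) c i * (pairing x (cor D`_i) * Bf R cor D`_i D`_i)
   = \sum_(i < size D) c i * (2 * Bf R cor x D`_i).
  apply: eq_bigr => i _; rewrite (Bf_key ch RS) //; apply: DR; exact: mem_nth.
rewrite ea Bf_sumr mulr_sumr; apply: eq_bigr => i _; ring.
Qed.

Lemma sq_nat (F : fieldType) (z : int) : exists k : nat, (z%:~R * z%:~R : F) = k%:R.
Proof.
case: z => k; first by exists (k * k)%N; rewrite natrM.
by exists (k.+1 * k.+1)%N; rewrite NegzE mulrNz mulrNN natrM.
Qed.

Lemma Bf_nat (F : fieldType) n (R : seq 'rV[F]_n) cor (ch : [pchar F] =i pred0) :
  root_system R cor -> forall a, a \in R ->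
  exists N : nat, Bf R cor a a = N%:R /\ (0 < N)%N.
Proof.
move=> [[uR n0R span] [h2 hrefl hint hred]] a aR.
suff : forall s, {subset s <= R} -> exists N : nat,
  \sum_(g <- s) pairing a (cor g) * pairing a (cor g) = N%:R /\ (a \in s -> 0 < N)%N.
  by move=> /(_ R (fun x xs => xs)) [N [eN pN]]; exists N; split => //; apply: pN.
elim=> [|g s IH] sub.
  by exists 0%N; rewrite big_nil.
have gR : g \in R by apply: sub; rewrite mem_head.
have [N [eN pN]] := IH (fun x xs => sub x (@mem_behead _ (g :: s) x xs)).
case: (hint g a gR aR) => z ez.
have [k ek] := sq_nat F z.
exists (k + N)%N; rewrite big_cons eN ez ek natrD; split => //.
rewrite in_cons => /orP [/eqP ag|aS]; last by rewrite addn_gt0 pN ?orbT.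
rewrite addn_gt0; apply/orP; left; rewrite lt0n; apply/negP => /eqP k0.
by move: ek; rewrite -ez -ag h2 // k0 -natrM => /(natr_injF ch).
Qed.

Lemma base_coef (F : fieldType) n (R D : seq 'rV[F]_n) :
  is_base R D -> forall u v : 'I_(size D) -> F,
  \sum_(i < size D) u i *: D`_i = \sum_(i < size D) v i *: D`_i -> forall i, u i = v i.
Proof.
move=> [_ ind _] u v e i; apply/eqP; rewrite -subr_eq0; apply/eqP.
apply: (ind (fun i => u i - v i)) => //.
under eq_bigr => k _ do rewrite scalerBl.
by rewrite sumrB e subrr.
Qed.

Lemma delta_comb (F : fieldType) n (D : seq 'rV[F]_n) (j : 'I_(size D)) :
  D`_j = \sum_(i < size D) (i == j)%:R *: D`_i.
Proof.
rewrite (bigD1 j) //= eqxx scale1r big1 ?addr0 // => i /negPf ->; by rewrite scale0r.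
Qed.

Lemma pos_rootbP (F : fieldType) n (R D : seq 'rV[F]_n) a :
  pos_rootb R D a = true <-> pos_root R D a.
Proof. by rewrite /pos_rootb; case: ClassicalDescription.excluded_middle_informative. Qed.

Lemma pos_refl (F : fieldType) n (R : seq 'rV[F]_n) cor D (ch : [pchar F] =i pred0) :
  root_system R cor -> is_base R D -> forall j : 'I_(size D),
  forall a, pos_root R D a -> a != D`_j ->
  pos_root R D (refl cor D`_j a) /\ refl cor D`_j a != D`_j.
Proof.
move=> RS B j a [aR [c ea]] adj; have RS' := RS; have B' := B.
move: RS' => [[uR n0R span] [h2 hrefl hint hred]].
move: B' => [DR ind comb].
set d := D`_j.
have dR : d \in R by apply: DR; exact: mem_nth.
have [z ez] := hint d a dR aR.
have ra : refl cor d a = \sum_(i < size D) ((c i)%:R - z%:~R * (i == j)%:R) *: D`_i.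
  rewrite /refl ez {1}ea /d [X in _ *: X]delta_comb scaler_sumr -sumrB.
  by apply: eq_bigr => i _; rewrite scalerA scalerBl.
have negc : forall i, (c i)%:R = - 1 :> F -> False.
  move=> i /eqP; rewrite -subr_eq0 opprK natr1 => /eqP.
  by move=> /(natr_injF ch (k := 0)).
have [i [ij ci]] : exists i, i != j /\ c i != 0%N.
  case: (boolP [exists i, (i != j) && (c i != 0%N)]).
    by move=> /existsP [i /andP [h1 h2']]; exists i.
  rewrite negb_exists => /forallP H.
  have ea' : a = (c j)%:R *: d.
    rewrite ea (bigD1 j) //= big1 ?addr0 // => i ij.
    by move: (H i); rewrite ij /= negbK => /eqP ->; rewrite scale0r.
  have := hred d (c j)%:R dR; rewrite -ea' => /(_ aR) [e1|e1].
    by move: adj; rewrite ea' e1 scale1r eqxx.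
  by case: (negc j e1).
have raR : refl cor d a \in R by apply: hrefl.
split; last first.
  apply/negP => /eqP e.
  have : a = - d by rewrite -(reflK a (h2 _ dR)) e refl_self // h2.
  rewrite ea /d [X in - X]delta_comb -sumrN.
  under [X in _ = X -> _]eq_bigr => k _ do rewrite -scaleNr.
  move=> /(base_coef B) /(_ j); rewrite eqxx => /negc //.
split => //.
case: (comb _ raR) => // [[e ee]].
move: ee; rewrite ra => /(f_equal (fun v => - v)); rewrite opprK -sumrN.
under [X in _ = X -> _]eq_bigr => k _ do rewrite -scaleNr.
move=> /(base_coef B) /(_ i); rewrite (negPf ij) mulr0 subr0.
move=> /eqP; rewrite -subr_eq0 opprK -natrD => /eqP /(natr_injF ch (k := 0)) /eqP.
by rewrite addn_eq0 (negPf ci).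
Qed.

Lemma rho_simple (F : fieldType) n (R : seq 'rV[F]_n) cor D (ch : [pchar F] =i pred0) :
  root_system R cor -> is_base R D -> forall j : 'I_(size D),
  pairing (rho R D) (cor D`_j) = 1.
Proof.
move=> RS B j; have RS' := RS; have B' := B.
move: RS' => [[uR n0R span] [h2 hrefl hint hred]].
move: B' => [DR ind comb].
set d := D`_j.
have dR : d \in R by apply: DR; exact: mem_nth.
have d0 : d != 0 by apply/negP => /eqP e; move: n0R; rewrite -e dR.
set P := [seq a <- R | pos_rootb R D a].
set S := \sum_(a <- R | pos_rootb R D a) a.
have SP : S = \sum_(a <- P) a by rewrite /P big_filter.
have dP : d \in P.
  rewrite mem_filter dR andbT; apply/pos_rootbP; split => //.
  by exists (fun i => nat_of_bool (i == j)); exact: delta_comb.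
have uP : uniq P by rewrite filter_uniq.
set P' := [seq a <- P | a != d].
have uP' : uniq P' by rewrite filter_uniq.
have perm : perm_eq (map (refl cor d) P') P'.
  have inj : injective (refl cor d).
    by apply: (can_inj (g := refl cor d)) => x; rewrite reflK ?h2.
  have um : uniq (map (refl cor d) P') by rewrite map_inj_uniq.
  have sub : {subset map (refl cor d) P' <= P'}.
    move=> x /mapP [a]; rewrite !mem_filter => /andP [ad /andP [/pos_rootbP pa aR]] ->.
    have [pr rd] := pos_refl ch RS B pa ad.
    rewrite rd /=; apply/andP; split; first by apply/pos_rootbP.
    by case: pr.
  have [_ eqi] := uniq_min_size um sub (eq_leq (esym (size_map _ _))).
  exact: uniq_perm.
have T1 : S = d + \sum_(a <- P') a by rewrite SP (bigD1_seq d) //= big_filter.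
have T2 : refl cor d S = - d + \sum_(a <- P') a.
  rewrite SP refl_sum (bigD1_seq d) //= refl_self ?h2 //; congr (_ + _).
  rewrite -big_filter -/P'.
  transitivity (\sum_(a <- map (refl cor d) P') a); first by rewrite big_map.
  exact: perm_big.
have e : pairing S (cor d) *: d = 2 *: d.
  have -> : pairing S (cor d) *: d = S - refl cor d S by rewrite /refl opprB addrC subrK.
  rewrite {1}T1 T2 opprD opprK addrACA subrr addr0 scaler_nat mulr2n //.
have p2 : pairing S (cor d) = 2.
  by move/eqP: e; rewrite -subr_eq0 -scalerBl scaler_eq0 (negPf d0) orbF subr_eq0 => /eqP.
have two0 : (2 : F) != 0.
  by apply/negP => /eqP /(natr_injF ch (m := 2) (k := 0)).
by rewrite /rho -/S pairingZl p2 mulVf.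
Qed.

Lemma mul_refl_mx (F : fieldType) n (cor : 'rV[F]_n -> 'rV[F]_n) b x :
  x *m refl_mx cor b = refl cor b x.
Proof. by rewrite /refl_mx refl_mxE. Qed.

Lemma weyl_facts (F : fieldType) n (R : seq 'rV[F]_n) cor (ch : [pchar F] =i pred0) w :
  root_system R cor -> in_weyl R cor w ->
  [/\ w \in unitmx, (forall a, a \in R -> a *m w \in R) &
      (forall a, a \in R -> forall x, pairing (x *m w) (cor (a *m w)) = pairing x (cor a))].
Proof.
move=> RS [s [sR ->]]; have RS' := RS.
move: RS' => [[uR n0R span] [h2 hrefl hint hred]].
elim: s sR => [|b s IH] /=.
  by move=> _; split; [exact: unitmx1| move=> a aR; rewrite mulmx1 | move=> a aR x; rewrite !mulmx1].
move=> /andP [bR /IH [u1 r1 t1]]; split.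
- rewrite unitmx_mul u1 andbT.
  suff : refl_mx cor b *m refl_mx cor b = 1%:M by move/mulmx1_unit => [].
  apply/row_matrixP => i; rewrite row_mul rowE mul_refl_mx mul_refl_mx reflK ?h2 //.
  by rewrite rowE mulmx1.
- by move=> a aR; rewrite mulmxA mul_refl_mx; apply: r1; apply: hrefl.
move=> a aR x; rewrite !mulmxA !mul_refl_mx t1; last by apply: hrefl.
exact: (transport ch RS aR bR).
Qed.

Lemma ev_hpoly (F : fieldType) n (H xi : 'rV[F]_n) : ev (hpoly H) xi = pairing xi H.
Proof.
rewrite /ev /hpoly (big_morph _ (mevalD _) (meval0 _)) /pairing.
by apply: eq_bigr => i _; rewrite mevalZ mevalXU mulrC.
Qed.

Lemma ev_int (F : fieldType) n (z : int) (xi : 'rV[F]_n) :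
  ev (z%:~R : {mpoly F[n]}) xi = z%:~R.
Proof. by rewrite /ev rmorph_int. Qed.

Lemma ev_dot (F : fieldType) n (R D : seq 'rV[F]_n) w f (nu : 'rV[F]_n) :
  ev (dot_poly R D w f) nu = ev f ((nu + rho R D) *m invmx w - rho R D).
Proof.
rewrite /ev /dot_poly comp_mpoly_meval; apply: meval_eq => j.
rewrite tnth_mktuple /dot_coord mevalB mevalC (big_morph _ (mevalD _) (meval0 _)).
rewrite !mxE; congr (_ - _); apply: eq_bigr => i _.
by rewrite mevalM mevalD mevalXU !mevalC !mxE.
Qed.

Lemma ev_hk (F : fieldType) n (H xi : 'rV[F]_n) (z : int) :
  ev (hpoly H - z%:~R) xi = pairing xi H - z%:~R.
Proof.
have := ev_hpoly H xi; rewrite /ev => <-.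
by rewrite mevalB rmorph_int.
Qed.

Unset Implicit Arguments.

Theorem mainTheorem14 (F : closedFieldType) (n : nat)
    (R : seq 'rV[F]_n) (cor : 'rV[F]_n -> 'rV[F]_n) (D : seq 'rV[F]_n)
    (w : 'M[F]_n) (Om : {mpoly F[n]} -> Prop) :
  [pchar F] =i pred0 ->
  root_system R cor ->
  is_base R D ->
  in_weyl R cor w ->
  prime_ideal Om ->
  prime_ideal (dot_ideal R D w Om) ->
  (exists mu, dominant_integral cor D mu /\ zero_set Om mu) ->
  (exists mu, dominant_integral cor D mu /\
              zero_set (dot_ideal R D w Om) mu) ->
  in_Wlambda R cor D Om w.
Proof.
move=> ch RS B Wl _ _ [mu [mudom muz]] [nu [nudom nuz]].
have RS' := RS; have B' := B.
move: RS' => [[uR n0R span] [h2 hrefl hint hred]].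
move: B' => [DR ind comb].
have [wu wR wT] := weyl_facts ch RS Wl.
move=> a [[[aR [z ez]] [_ [c ea]]] _].
set b := a *m w.
have bR : b \in R by exact: wR.
case: (comb b bR) => [bpos|[e eb]]; first by split.
exfalso.
set rh := rho R D.
set mu' := (nu + rh) *m invmx w - rh.
have mu'z : forall f, Om f -> ev f mu' = 0.
  by move=> f Of; rewrite -ev_dot; apply: nuz; exists f.
have pmu : pairing mu (cor a) = z%:~R.
  by apply/eqP; rewrite -subr_eq0 -ev_hk; apply/eqP; apply: muz.
have pmu' : pairing mu' (cor a) = z%:~R.
  by apply/eqP; rewrite -subr_eq0 -ev_hk; apply/eqP; apply: mu'z.
have emw : (mu' + rh) *m w = nu + rh by rewrite /mu' subrK mulmxKV.
have X1 : pairing (nu + rh) (cor b) = pairing (mu + rh) (cor a).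
  by rewrite -emw wT // (pairingDl mu') (pairingDl mu) pmu pmu'.
have : forall i : 'I_(size D), exists k : nat, pairing mu (cor D`_i) = k%:R.
  move=> i; apply: mudom; exact: mem_nth.
move/fin_all_exists => [km hkm].
have : forall i : 'I_(size D), exists k : nat, pairing nu (cor D`_i) = k%:R.
  move=> i; apply: nudom; exact: mem_nth.
move/fin_all_exists => [kn hkn].
have : forall i : 'I_(size D), exists k : nat, Bf R cor D`_i D`_i = k%:R /\ (0 < k)%N.
  move=> i; apply: (Bf_nat ch RS); apply: DR; exact: mem_nth.
move/fin_all_exists => [N hN].
have [Na [eNa pNa]] := Bf_nat ch RS aR.
have [Nb [eNb pNb]] := Bf_nat ch RS bR.
have rhoD : forall i : 'I_(size D), pairing rh (cor D`_i) = 1 by move=> i; exact: rho_simple.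
set X := pairing (mu + rh) (cor a).
have FA := coroot_formula ch RS DR aR ea (mu + rh).
have eb' : b = \sum_(i < size D) (- (e i)%:R) *: D`_i.
  by rewrite -[b]opprK eb -sumrN; apply: eq_bigr => i _; rewrite scaleNr.
have FB := coroot_formula ch RS DR bR eb' (nu + rh).
set P := (\sum_(i < size D) (c i * (km i).+1 * N i))%N.
set Q := (\sum_(i < size D) (e i * (kn i).+1 * N i))%N.
have XA : X * Na%:R = P%:R.
  rewrite -eNa FA /P natr_sum; apply: eq_bigr => i _.
  by rewrite pairingDl hkm rhoD (hN i).1 !natrM natr1 mulrA.
have XB : X * Nb%:R = - Q%:R.
  rewrite -eNb /X -X1 FB /Q natr_sum -sumrN; apply: eq_bigr => i _.
  by rewrite pairingDl hkn rhoD (hN i).1 !natrM natr1 mulNr mulrA.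
have : ((P * Nb + Q * Na)%N%:R : F) = 0.
  rewrite natrD !natrM -XA (_ : Q%:R = - (X * Nb%:R)); last by rewrite XB opprK.
  ring.
move=> /(natr_injF ch (k := 0)) /eqP; rewrite addn_eq0 muln_eq0 => /andP [/orP [P0|/eqP Nb0] _];
  last by move: pNb; rewrite Nb0.
move: P0; rewrite /P sum_nat_eq0 => /forallP P0.
have c0 : forall i, c i = 0%N.
  move=> i; move: (P0 i) => /=; rewrite !muln_eq0 /= -[(km i).+1 == 0%N]/false orbF.
  by case/orP => [/eqP //| /eqP Ni]; move: (hN i).2; rewrite Ni.
have a0 : a = 0 by rewrite ea big1 // => i _; rewrite c0 scale0r.
by move: n0R; rewrite -a0 aR.
Qed.
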